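(* Consider the network with vertices $s_1,s_2,s_3,t$ and directed edges $(s_3,s_1),(s_3,s_2),(s_1,t),(s_2,t)$, where $\mathcal{A}=\mathcal{Z}=\{0,1\}$, the messages $X_1^k,X_2^k,X_3^k$ have all components i.i.d. uniform on $\{0,1\}$, and the demand function is the arithmetic sum $f(X_1,X_2,X_3)=X_1+X_2+X_3\in\{0,1,2,3\}$ over the integers. Then every admissible rate tuple $(R_{31},R_{32},R_1,R_2)$ satisfies $R_1\ge1$, $R_2\ge1$, and $$\frac{R_1+R_2}{2}\ \ge\ \frac{0.5+3-0.75\log_2 3}{2}\approx\frac{2.31128}{2}.$$
   Context: A source-network code $\mathcal{C}_{f,k}$ consists of encoders $\phi_{(s_3,s_1)},\phi_{(s_3,s_2)}:\mathcal{A}^k\to\mathcal{Z}^*$, $\phi_{(s_1,t)},\phi_{(s_2,t)}:\mathcal{A}^k\times\mathcal{Z}^*\to\mathcal{Z}^*$ ($\mathcal{Z}^*$ = finite binary sequences) and a decoder $\psi_t:\mathcal{Z}^*\times\mathcal{Z}^*\to\{0,1,2,3\}^k$; $\mathbf{Z}_{31}=\phi_{(s_3,s_1)}(X_3^k)$, $\mathbf{Z}_{32}=\phi_{(s_3,s_2)}(X_3^k)$, $\mathbf{Z}_1=\phi_{(s_1,t)}(X_1^k,\mathbf{Z}_{31})$, $\mathbf{Z}_2=\phi_{(s_2,t)}(X_2^k,\mathbf{Z}_{32})$, and $\Pr\{\psi_t(\mathbf{Z}_1,\mathbf{Z}_2)\ne f(X_1^k,X_2^k,X_3^k)\}=0$,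 with $f$ applied componentwise. A tuple $(R_{31},R_{32},R_1,R_2)$ is admissible if for every $\epsilon>0$ there exist a sufficiently large $k$ and such a code with $\log|\mathcal{Z}|\,\mathbb{E}\ell(\mathbf{Z}_e)\le k\log|\mathcal{A}|(R_e+\epsilon)$ for each $e\in\{31,32,1,2\}$, where $\ell$ denotes length in symbols of $\mathcal{Z}$. *)

(* Defs.v *)
From mathcomp Require Import all_boot.
From Stdlib Require Import Reals.
Set Implicit Arguments. Unset Strict Implicit. Unset Printing Implicit Defensive.

(* Alphabet A = Z = {0,1} = bool; Z^* = seq bool (finite binary sequences). *)
Definition word (k : nat) := {ffun 'I_k -> bool}.
Definition outword (k : nat) := {ffun 'I_k -> 'I_4}.

Definition fsum (a b c : bool) : 'I_4 := inord (nat_of_bool a + nat_of_bool b + nat_of_bool c).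
Definition fvec k (x1 x2 x3 : word k) : outword k := [ffun i => fsum (x1 i) (x2 i) (x3 i)].

(* A source-network code C_{f,k} on the network s3->s1, s3->s2, s1->t, s2->t. *)
Record code (k : nat) := Code {
  enc31 : word k -> seq bool;
  enc32 : word k -> seq bool;
  enc1  : word k -> seq bool -> seq bool;
  enc2  : word k -> seq bool -> seq bool;
  dec   : seq bool -> seq bool -> outword k }.

(* Message triple (X1^k, X2^k, X3^k), uniformly distributed on its finite type. *)
Definition msg (k : nat) := (word k * word k * word k)%type.

Section CodeDefs.
Variables (k : nat) (C : code k).
Definition Z31 (x : msg k) := enc31 C x.2.
Definition Z32 (x : msg k) := enc32 C x.2.
Definition Z1 (x : msg k) := enc1 C x.1.1 (Z31 x).
Definition Z2 (x : msg k) := enc2 C x.1.2 (Z32 x).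
Definition output (x : msg k) := dec C (Z1 x) (Z2 x).

Definition err_prob : R :=
  INR #|[set x : msg k | output x != fvec x.1.1 x.1.2 x.2]| / INR #|{: msg k}|.

Definition exp_len (Z : msg k -> seq bool) : R :=
  INR (\sum_(x : msg k) size (Z x)) / INR #|{: msg k}|.
End CodeDefs.

(* Admissibility of (R31,R32,R1,R2): for every eps > 0 there are arbitrarily
   large block lengths k with a zero-error code meeting the rate constraints
   log|Z| E l(Z_e) <= k log|A| (R_e + eps), with |A| = |Z| = 2. *)
Definition admissible (R31 R32 R1 R2 : R) : Prop :=
  forall eps : R, (0 < eps)%R -> forall N : nat, exists k : nat, exists C : code k,
    (N <= k)%N /\ err_prob C = 0%R /\
    (ln 2 * exp_len (Z31 C) <= INR k * ln 2 * (R31 + eps))%R /\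
    (ln 2 * exp_len (Z32 C) <= INR k * ln 2 * (R32 + eps))%R /\
    (ln 2 * exp_len (Z1 C) <= INR k * ln 2 * (R1 + eps))%R /\
    (ln 2 * exp_len (Z2 C) <= INR k * ln 2 * (R2 + eps))%R.

Definition log2 (x : R) : R := (ln x / ln 2)%R.

(* Main.v *)
Require Import Defs.
From HB Require Import structures.
From mathcomp Require Import all_boot.
From Stdlib Require Import Reals Lra.


Lemma Rplus_assoc' : associative Rplus. Proof. move=> *; ring. Qed.
Lemma Rmult_assoc' : associative Rmult. Proof. move=> *; ring. Qed.
HB.instance Definition _ := Monoid.isComLaw.Build R 0%R Rplus Rplus_assoc' Rplus_comm Rplus_0_l.
HB.instance Definition _ := Monoid.isComLaw.Build R 1%R Rmult Rmult_assoc' Rmult_comm Rmult_1_l.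
HB.instance Definition _ := Monoid.isMulLaw.Build R 0%R Rmult Rmult_0_l Rmult_0_r.
HB.instance Definition _ := Monoid.isAddLaw.Build R Rmult Rplus Rmult_plus_distr_r Rmult_plus_distr_l.

Open Scope R_scope.

Lemma iterR n c : iter n (Rplus c) 0 = INR n * c.
Proof. elim: n => [|n IH]; first (simpl; lra). rewrite S_INR. change (c + iter n (Rplus c) 0 = (INR n + 1) * c). rewrite IH. lra. Qed.

Lemma sumR_le (I : Type) (r : seq I) (P : pred I) (F G : I -> R) :
  (forall i, P i -> F i <= G i) ->
  \big[Rplus/0]_(i <- r | P i) F i <= \big[Rplus/0]_(i <- r | P i) G i.
Proof. move=> H; apply: (big_ind2 (fun a b => a <= b)) => //; [lra|]. move=> *; lra. Qed.

Lemma sumR_ge0 (I : Type) (r : seq I) (P : pred I) (F : I -> R) :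
  (forall i, P i -> 0 <= F i) -> 0 <= \big[Rplus/0]_(i <- r | P i) F i.
Proof. move=> H; apply: (big_ind (fun a => 0 <= a)) => //; [lra|]. move=> *; lra. Qed.

Lemma sumR_distr (I : Type) (r : seq I) (P : pred I) (F : I -> R) c :
  \big[Rplus/0]_(i <- r | P i) (c * F i) = c * \big[Rplus/0]_(i <- r | P i) F i.
Proof. rewrite (big_distrr (R:=R) (times:=Rmult) (plus:=Rplus)) //. Qed.

Lemma INR_sum (I : Type) (r : seq I) (P : pred I) (F : I -> nat) :
  INR (\sum_(i <- r | P i) F i) = \big[Rplus/0]_(i <- r | P i) INR (F i).
Proof. apply: (big_morph INR) => //. move=> a b; exact: plus_INR. Qed.

Lemma ln_prod (I : Type) (r : seq I) (P : pred I) (F : I -> R) :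
  (forall i, P i -> 0 < F i) ->
  ln (\big[Rmult/1]_(i <- r | P i) F i) = \big[Rplus/0]_(i <- r | P i) ln (F i).
Proof.
move=> H.
suff: (0 < \big[Rmult/1]_(i <- r | P i) F i /\ \big[Rplus/0]_(i <- r | P i) ln (F i) = ln (\big[Rmult/1]_(i <- r | P i) F i)) by case.
apply: (big_rec2 (fun a b => 0 < b /\ a = ln b)); first by split; [lra| rewrite ln_1].
move=> i a b Pi [bp ->]; split; first by apply: Rmult_lt_0_compat; auto.
rewrite ln_mult //; auto.
Qed.

Lemma sum_const_fin (T : finType) (P : pred T) c :
  \big[Rplus/0]_(x | P x) c = INR #|P| * c.
Proof. by rewrite big_const iterR. Qed.

Lemma ln_le_sub1 y : 0 < y -> ln y <= y - 1.
Proof. move=> yp. have := exp_ineq1_le (ln y). rewrite exp_ln //; lra. Qed.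

Lemma ln_tangent y m : 0 < y -> 0 < m -> ln y <= ln m + y / m - 1.
Proof.
move=> yp mp. have h := ln_le_sub1 (y/m) (Rdiv_lt_0_compat _ _ yp mp).
rewrite /Rdiv ln_mult in h; last by apply: Rinv_0_lt_compat. 2: done.
rewrite ln_Rinv in h => //. rewrite /Rdiv; lra.
Qed.

Lemma ln_mono x y : 0 < x -> x <= y -> ln x <= ln y.
Proof. move=> xp [h|->]; [apply: Rlt_le; exact: ln_increasing| lra]. Qed.

Lemma part_seq (T : eqType) (E : eqType) (r : seq T) (F : T -> E) (P : pred T) (h : T -> R) :
  \big[Rplus/0]_(x <- r | P x) h x =
  \big[Rplus/0]_(z <- undup (map F r)) \big[Rplus/0]_(x <- r | P x && (F x == z)) h x.
Proof.
under [RHS]eq_bigr do rewrite big_mkcond.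
rewrite exchange_big [LHS]big_mkcond /=. apply: eq_big_seq => x xr.
case: (P x) => /=; last by rewrite big1.
rewrite -big_mkcond big_const_seq.
have -> : count (fun z => F x == z) (undup (map F r)) = 1%nat.
  rewrite (eq_count (a2 := pred1 (F x))); last by move=> z; rewrite /= eq_sym.
  by rewrite count_uniq_mem ?undup_uniq // mem_undup map_f.
simpl; lra.
Qed.

Definition a_w (l : nat) : R := / (INR l + 1) * / (INR l + 2).
Definition gw (z : seq bool) : R := a_w (size z) * / 2 ^ (size z).

Lemma INR_pos1 l : 0 < INR l + 1.
Proof. have := pos_INR l; lra. Qed.
Lemma INR_pos2 l : 0 < INR l + 2.
Proof. have := pos_INR l; lra. Qed.

Lemma a_w_pos l : 0 < a_w l.
Proof. rewrite /a_w; apply: Rmult_lt_0_compat; apply: Rinv_0_lt_compat; [exact: INR_pos1|exact: INR_pos2]. Qed.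

Lemma gw_pos z : 0 < gw z.
Proof. rewrite /gw; apply: Rmult_lt_0_compat; first exact: a_w_pos. apply: Rinv_0_lt_compat; apply: pow_lt; lra. Qed.

Lemma count_size_le (s : seq (seq bool)) l : uniq s -> (count (fun z => size z == l) s <= expn 2 l)%nat.
Proof.
move=> us. rewrite -size_filter. set s' := filter _ s.
have us' : uniq s' by rewrite filter_uniq.
have Hs : all (fun z => size z == l) s' by apply/allP => z; rewrite mem_filter => /andP[].
pose f (z : seq bool) : l.-tuple bool := insubd (nseq_tuple l false) z.
have inj : {in s' &, injective f}.
  move=> x y xs ys /(congr1 val). by rewrite !val_insubd (allP Hs x xs) (allP Hs y ys).
rewrite -(size_map f).
have /card_uniqP <- : uniq (map f s') by rewrite map_inj_in_uniq.
apply: leq_trans (max_card _) _. rewrite card_tuple card_bool. by [].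
Qed.

Lemma INR_expn2 l : INR (expn 2 l) = 2 ^ l.
Proof. elim: l => [|l IH]; first by simpl. rewrite expnS mult_INR IH /=. lra. Qed.

Lemma sum_aw_le (M : nat) (u : seq nat) : uniq u -> all (fun l => l < M)%nat u ->
  \big[Rplus/0]_(l <- u) a_w l <= 1 - / (INR M + 1).
Proof.
elim: M u => [|M IH] u uu au.
  case: u uu au => [|x u] //= _ _.
  rewrite big_nil /=. rewrite Rplus_0_l Rinv_1; lra.
rewrite S_INR (bigID (fun l => l == M)) /=.
have h1 : \big[Rplus/0]_(i <- u | i == M) a_w i <= a_w M.
  rewrite (eq_bigr (fun _ => a_w M)); last by move=> i /eqP ->.
  rewrite big_const_seq iterR.
  have : (count (fun i => i == M) u <= 1)%nat by rewrite (count_uniq_mem M uu); case: (M \in u).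
  case: (count _ u) => [|[|n]] //= _; have := a_w_pos M; simpl; lra.
have h2 : \big[Rplus/0]_(i <- u | i != M) a_w i <= 1 - / (INR M + 1).
  rewrite -big_filter; apply: IH; first by rewrite filter_uniq.
  apply/allP => l; rewrite mem_filter => /andP[lM lu].
  have := allP au l lu. by rewrite ltnS leq_eqVlt (negbTE lM).
have : a_w M = / (INR M + 1) - / (INR M + 2).
  rewrite /a_w. have := INR_pos1 M; have := INR_pos2 M => *. field; lra.
have : INR M + 1 + 1 = INR M + 2 by lra. move=> ->. lra.
Qed.

Lemma kraft (s : seq (seq bool)) : uniq s -> \big[Rplus/0]_(z <- s) gw z <= 1.
Proof.
move=> us.
rewrite (part_seq _ _ s size xpredT).
set M := (\max_(z <- s) size z).+1.
apply: Rle_trans (_ : \big[Rplus/0]_(l <- undup (map size s)) a_w l <= _).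
  apply: sumR_le => l _.
  rewrite (eq_bigr (fun _ => a_w l * / 2 ^ l)); last by move=> z /= /eqP <-.
  rewrite big_const_seq iterR.
  have hc := count_size_le s l us.
  have : INR (count (fun z => true && (size z == l)) s) <= 2 ^ l.
    rewrite -INR_expn2; apply: le_INR; apply/leP. exact: hc.
  have := a_w_pos l. have : 0 < 2 ^ l by apply: pow_lt; lra. move=> p2 pa hle.
  have e : a_w l = (2 ^ l) * (a_w l * / 2 ^ l) by field; lra.
  rewrite [X in _ <= X]e. apply: Rmult_le_compat_r => //.
  apply: Rlt_le; apply: Rmult_lt_0_compat => //; exact: Rinv_0_lt_compat.
apply: Rle_trans (sum_aw_le M _ _ _) _; first exact: undup_uniq.
  apply/allP => l; rewrite mem_undup => /mapP [z zs ->]. rewrite ltnS. exact: leq_bigmax_seq.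
have := INR_pos1 M => h. have := Rinv_0_lt_compat _ h. lra.
Qed.

Lemma sum_inj_le (T T' : finType) (P : pred T) (phi : T -> T') (G : T' -> R) :
  {in P &, injective phi} -> (forall c, 0 <= G c) ->
  \big[Rplus/0]_(y | P y) G (phi y) <= \big[Rplus/0]_(c : T') G c.
Proof.
move=> inj G0.
have -> : \big[Rplus/0]_(y | P y) G (phi y) = \big[Rplus/0]_(y in P) G (phi y) by apply: eq_bigl.
rewrite -(big_imset G inj).
rewrite [X in _ <= X](bigID (fun c => c \in [set phi x | x in P])) /=.
have := sumR_ge0 _ (index_enum T') (fun c => c \notin [set phi x | x in P]) G (fun c _ => G0 c).
move=> h; rewrite -[X in X <= _]Rplus_0_r; apply: Rplus_le_compat => //; right; apply: eq_bigl => c //.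
Qed.

Section Core.
Variable k : nat.
Definition Nm : R := INR #|{: msg k}|.

Lemma Nm_pos : 0 < Nm.
Proof.
rewrite /Nm; apply: lt_0_INR; apply/ltP; apply/card_gt0P.
by exists (([ffun=> false], [ffun=> false]), [ffun=> false]).
Qed.

Lemma core (Za Zb : msg k -> seq bool) (w : msg k -> R) :
  (forall x, 0 < w x) ->
  (forall x, \big[Rplus/0]_(y | (Za y == Za x) && (Zb y == Zb x)) w y <= 1) ->
  \big[Rplus/0]_(x : msg k) ln (Nm * (w x * gw (Za x) * gw (Zb x))) <= 0.
Proof.
move=> wp Hfib.
have qp x : 0 < w x * gw (Za x) * gw (Zb x).
  apply: Rmult_lt_0_compat; last exact: gw_pos. apply: Rmult_lt_0_compat; [exact: wp|exact: gw_pos].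
have Hq : \big[Rplus/0]_(x : msg k) (w x * gw (Za x) * gw (Zb x)) <= 1.
  rewrite (part_seq _ _ _ Za xpredT).
  apply: Rle_trans (_ : \big[Rplus/0]_(z1 <- undup (map Za (index_enum _))) gw z1 <= 1); last exact/kraft/undup_uniq.
  apply: sumR_le => z1 _.
  rewrite (eq_bigr (fun x => gw z1 * (w x * gw (Zb x)))); last first.
    move=> x /= /eqP ->; lra.
  rewrite sumR_distr. 
  suff : \big[Rplus/0]_(i <- index_enum (msg k) | true && (Za i == z1)) (w i * gw (Zb i)) <= 1.
    have := gw_pos z1 => *. rewrite -[X in _ <= X]Rmult_1_r. apply: Rmult_le_compat_l => //; lra.
  rewrite (part_seq _ _ _ Zb (fun i => true && (Za i == z1))).
  apply: Rle_trans (_ : \big[Rplus/0]_(z2 <- undup (map Zb (index_enum _))) gw z2 <= 1); last exact/kraft/undup_uniq.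
  apply: sumR_le => z2 _.
  rewrite (eq_bigr (fun x => gw z2 * w x)); last first.
    move=> x /andP [_ /eqP ->]; lra.
  rewrite sumR_distr.
  suff : \big[Rplus/0]_(i <- index_enum (msg k) | (true && (Za i == z1)) && (Zb i == z2)) w i <= 1.
    have := gw_pos z2 => *. rewrite -[X in _ <= X]Rmult_1_r. apply: Rmult_le_compat_l => //; lra.
  case: (boolP [exists x, (Za x == z1) && (Zb x == z2)]).
    case/existsP => x0 /andP [/eqP e1 /eqP e2].
    apply: Rle_trans (Hfib x0). right. apply: eq_bigl => y. by rewrite e1 e2.
  rewrite negb_exists => /forallP H.
  rewrite big_pred0; first lra.
  move=> y /=. exact: negbTE (H y).
apply: Rle_trans (_ : \big[Rplus/0]_(x : msg k) (Nm * (w x * gw (Za x) * gw (Zb x)) - 1) <= 0).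
  apply: sumR_le => x _. apply: ln_le_sub1. apply: Rmult_lt_0_compat; [exact: Nm_pos|exact: qp].
rewrite /Rminus big_split /= sumR_distr sum_const_fin.
have -> : INR #|(fun _ : msg k => true)| = Nm by rewrite /Nm; congr INR; apply: eq_card.
apply: Rle_trans (Rplus_le_compat_r _ _ _ (Rmult_le_compat_l _ _ _ (Rlt_le _ _ Nm_pos) Hq)) _; lra.
Qed.
End Core.

Lemma jensen k (L : msg k -> R) : (forall x, 0 <= L x) ->
  \big[Rplus/0]_(x : msg k) ln (L x + 2) <= Nm k * ln (\big[Rplus/0]_(x : msg k) L x / Nm k + 2).
Proof.
move=> L0. have np := Nm_pos k.
set E := \big[Rplus/0]_(x : msg k) L x.
have E0 : 0 <= E by apply: sumR_ge0 => x _; exact: L0.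
have mp : 0 < E / Nm k + 2. have : 0 <= E / Nm k by apply: Rmult_le_pos => //; apply: Rlt_le; apply: Rinv_0_lt_compat. lra.
apply: Rle_trans (_ : \big[Rplus/0]_(x : msg k) (ln (E / Nm k + 2) - 1 + / (E / Nm k + 2) * (L x + 2)) <= _).
  apply: sumR_le => x _. have := ln_tangent (L x + 2) _ ltac:(have := L0 x; lra) mp. rewrite /Rdiv. lra.
rewrite big_split /= sumR_distr big_split /= sum_const_fin sum_const_fin.
have -> : INR #|(fun _ : msg k => true)| = Nm k by rewrite /Nm; congr INR; apply: eq_card.
fold E.
have e : / (E / Nm k + 2) * (E + Nm k * 2) = Nm k.
  field. split; lra.
rewrite big_split /= sum_const_fin.
have -> : INR #|(fun _ : msg k => true)| = Nm k by rewrite /Nm; congr INR; apply: eq_card.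
fold E. rewrite e. lra.
Qed.

Lemma ln_gw z : ln (gw z) = - (ln (INR (size z) + 1) + ln (INR (size z) + 2) + INR (size z) * ln 2).
Proof.
have p2 : 0 < 2 ^ size z by apply: pow_lt; lra.
have q1 := INR_pos1 (size z). have q2 := INR_pos2 (size z).
rewrite /gw /a_w ln_mult; last (apply: Rinv_0_lt_compat; lra).
  2: (apply: Rmult_lt_0_compat; apply: Rinv_0_lt_compat; lra).
rewrite ln_mult; try (apply: Rinv_0_lt_compat; lra).
rewrite !ln_Rinv // ln_pow; lra.
Qed.

Lemma ln_expand k w z1 z2 : 0 < w ->
  ln (Nm k * (w * gw z1 * gw z2)) = ln (Nm k) + ln w
    - (ln (INR (size z1) + 1) + ln (INR (size z1) + 2) + INR (size z1) * ln 2)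
    - (ln (INR (size z2) + 1) + ln (INR (size z2) + 2) + INR (size z2) * ln 2).
Proof.
move=> wp. have g1 := gw_pos z1. have g2 := gw_pos z2. have np := Nm_pos k.
rewrite ln_mult //; last by apply: Rmult_lt_0_compat => //; apply: Rmult_lt_0_compat.
rewrite ln_mult //; last by apply: Rmult_lt_0_compat.
rewrite ln_mult // !ln_gw. lra.
Qed.

Lemma sumR_sub (I : Type) (r : seq I) (P : pred I) (F G : I -> R) :
  \big[Rplus/0]_(i <- r | P i) (F i - G i) = \big[Rplus/0]_(i <- r | P i) F i - \big[Rplus/0]_(i <- r | P i) G i.
Proof.
rewrite /Rminus big_split /=. congr Rplus.
symmetry; apply: (big_morph Ropp) => [a b|]; lra.
Qed.

Lemma bound k (Za Zb : msg k -> seq bool) (w : msg k -> R) :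
  (forall x, 0 < w x) ->
  (forall x, \big[Rplus/0]_(y | (Za y == Za x) && (Zb y == Zb x)) w y <= 1) ->
  ln (Nm k) + (\big[Rplus/0]_(x : msg k) ln (w x)) / Nm k <=
  2 * ln (exp_len Za + 2) + 2 * ln (exp_len Zb + 2) + ln 2 * (exp_len Za + exp_len Zb).
Proof.
move=> wp Hf. have H := core k Za Zb w wp Hf. have np := Nm_pos k.
set l1 := fun x => INR (size (Za x)). set l2 := fun x => INR (size (Zb x)).
have H2 : \big[Rplus/0]_(x : msg k) ((ln (Nm k) + ln (w x)) - ((2 * ln (l1 x + 2) + ln 2 * l1 x) + (2 * ln (l2 x + 2) + ln 2 * l2 x))) <= 0.
  apply: Rle_trans H. apply: sumR_le => x _. rewrite ln_expand //.
  have q1 := INR_pos1 (size (Za x)). have q2 := INR_pos1 (size (Zb x)).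
  have : ln (l1 x + 1) <= ln (l1 x + 2) by apply: ln_mono; rewrite /l1; lra.
  have : ln (l2 x + 1) <= ln (l2 x + 2) by apply: ln_mono; rewrite /l2; lra.
  rewrite /l1 /l2; lra.
rewrite sumR_sub big_split /= big_split /= big_split /= big_split /= !sumR_distr sum_const_fin in H2.
have eN : INR #|(fun _ : msg k => true)| = Nm k by rewrite /Nm; congr INR; apply: eq_card.
rewrite eN in H2.
have E1 : exp_len Za = \big[Rplus/0]_(x : msg k) l1 x / Nm k by rewrite /exp_len INR_sum.
have E2 : exp_len Zb = \big[Rplus/0]_(x : msg k) l2 x / Nm k by rewrite /exp_len INR_sum.
have J1 := jensen k l1 (fun x => pos_INR _).
have J2 := jensen k l2 (fun x => pos_INR _).
rewrite -E1 in J1. rewrite -E2 in J2.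
have S1 : \big[Rplus/0]_(x : msg k) l1 x = Nm k * exp_len Za by rewrite E1; field; lra.
have S2 : \big[Rplus/0]_(x : msg k) l2 x = Nm k * exp_len Zb by rewrite E2; field; lra.
rewrite S1 S2 in H2.
set SW := \big[Rplus/0]_(x : msg k) ln (w x) in H2 *.
have e : SW / Nm k = SW * / Nm k by [].
have hi := Rinv_0_lt_compat _ np.
set B1 := \big[Rplus/0]_(x : msg k) ln (l1 x + 2) in J1 H2.
set B2 := \big[Rplus/0]_(x : msg k) ln (l2 x + 2) in J2 H2.
have key : Nm k * ln (Nm k) + SW <= Nm k * (2 * ln (exp_len Za + 2) + 2 * ln (exp_len Zb + 2) + ln 2 * (exp_len Za + exp_len Zb)) by lra.
have : (Nm k * ln (Nm k) + SW) * / Nm k <= (Nm k * (2 * ln (exp_len Za + 2) + 2 * ln (exp_len Zb + 2) + ln 2 * (exp_len Za + exp_len Zb))) * / Nm k.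
  apply: Rmult_le_compat_r => //; lra.
have ee : forall a, Nm k * a * / Nm k = a by move=> a; field; lra.
rewrite ee Rmult_plus_distr_r ee. rewrite /Rdiv. lra.
Qed.
Lemma fsumE a b c : nat_of_ord (fsum a b c) = (nat_of_bool a + nat_of_bool b + nat_of_bool c)%nat.
Proof. rewrite /fsum inordK //. by case: a; case: b; case: c. Qed.
Lemma fsum_inj1 a a' b c : fsum a b c = fsum a' b c -> a = a'.
Proof. move/(congr1 (@nat_of_ord 4)). rewrite !fsumE. by case: a; case: a'; case: b; case: c. Qed.
Lemma fsum_inj2 a b b' c : fsum a b c = fsum a b' c -> b = b'.
Proof. move/(congr1 (@nat_of_ord 4)). rewrite !fsumE. by case: a; case: b'; case: b; case: c. Qed.
Definition pw (s : 'I_4) (c : bool) : R :=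
  match nat_of_ord s, c with
  | 0%nat, false => 1 | 1%nat, false => 2/3 | 1%nat, true => 1/3
  | 2%nat, false => 1/3 | 2%nat, true => 2/3 | 3%nat, true => 1 | _, _ => 0 end.
Lemma pwE a b c : pw (fsum a b c) c = match (nat_of_bool a + nat_of_bool b + nat_of_bool c)%nat, c with
  | 0%nat, false => 1 | 1%nat, false => 2/3 | 1%nat, true => 1/3
  | 2%nat, false => 1/3 | 2%nat, true => 2/3 | 3%nat, true => 1 | _, _ => 0 end.
Proof. by rewrite /pw fsumE. Qed.

Lemma pw_pos a b c : 0 < pw (fsum a b c) c.
Proof. rewrite pwE; case: a; case: b; case: c => /=; lra. Qed.

Lemma pw_sum (s : 'I_4) : pw s true + pw s false = 1.
Proof. case: s => [[|[|[|[|n]]]] H] //; rewrite /pw /=; lra. Qed.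

Lemma ln_third : ln (1/3) = - ln 3.
Proof. rewrite /Rdiv Rmult_1_l ln_Rinv //; lra. Qed.
Lemma ln_twothird : ln (2/3) = ln 2 - ln 3.
Proof. rewrite /Rdiv ln_mult ?ln_Rinv //; try lra. Qed.

Lemma pw_ln :
  let L a b c := ln (pw (fsum a b c) c) in
  L true true true + L true true false + (L true false true + L true false false) +
  (L false true true + L false true false + (L false false true + L false false false))
  = 4 * ln 2 - 6 * ln 3.
Proof.
rewrite /= !pwE /= ln_1 ln_third ln_twothird. lra.
Qed.

Lemma correct k (C : code k) : err_prob C = 0 -> forall x, output C x = fvec x.1.1 x.1.2 x.2.
Proof.
rewrite /err_prob => h x.
set S := [set x : msg k | _] in h.
have hp : 0 < INR #|{: msg k}| by exact: (Nm_pos k).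
have h0 : INR #|S| = 0.
  have : INR #|S| = INR #|S| / INR #|{: msg k}| * INR #|{: msg k}| by field; lra.
  rewrite h; lra.
have : #|S| = 0%nat by apply: INR_eq.
move/eqP; rewrite cards_eq0 => /eqP S0.
have : x \notin S by rewrite S0 inE.
by rewrite inE negbK => /eqP.
Qed.

Lemma fvec_inj1 k (a a' b c : word k) : fvec a b c = fvec a' b c -> a = a'.
Proof. move=> e; apply/ffunP => i; have := congr1 (fun f : outword k => f i) e; rewrite !ffunE; exact: fsum_inj1. Qed.
Lemma fvec_inj2 k (a b b' c : word k) : fvec a b c = fvec a b' c -> b = b'.
Proof. move=> e; apply/ffunP => i; have := congr1 (fun f : outword k => f i) e; rewrite !ffunE; exact: fsum_inj2. Qed.

Lemma card_word k : INR #|{: word k}| = 2 ^ k.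
Proof. by rewrite card_ffun card_bool card_ord INR_expn2. Qed.

Lemma Nm_eq k : Nm k = 2 ^ k * 2 ^ k * 2 ^ k.
Proof. by rewrite /Nm !card_prod !mult_INR card_word. Qed.

Lemma ln_2k k : ln (2 ^ k) = INR k * ln 2.
Proof. apply: ln_pow; lra. Qed.

Lemma card_all (T : finType) : INR #|(fun _ : T => true)| = INR #|{: T}|.
Proof. by congr INR; apply: eq_card. Qed.

Lemma exp_len_nil k : exp_len (fun _ : msg k => [::]) = 0.
Proof. rewrite /exp_len big1 //= /Rdiv Rmult_0_l //. Qed.

Lemma part1 k (C : code k) : err_prob C = 0 ->
  INR k * ln 2 <= 2 * ln (exp_len (Z1 C) + 2) + 2 * ln 2 + ln 2 * exp_len (Z1 C).
Proof.
move=> e. have cor := correct k C e.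
have p2 : 0 < 2 ^ k by apply: pow_lt; lra.
set c := / (2 ^ k * 2 ^ k).
have cp : 0 < c by apply: Rinv_0_lt_compat; nra.
have := bound k (Z1 C) (fun _ => [::]) (fun _ => c) (fun _ => cp) _.
rewrite exp_len_nil Rplus_0_l Rplus_0_r sum_const_fin card_all.
have -> : INR #|{: msg k}| = Nm k by [].
have np := Nm_pos k.
have -> : Nm k * ln c / Nm k = ln c by field; lra.
rewrite Nm_eq /c ln_Rinv ?ln_mult //; try nra.
rewrite ln_2k. move=> H; apply: Rle_trans (H _) => //. lra.
move=> x.
apply: Rle_trans (sum_inj_le _ _ _ (fun y : msg k => (y.1.2, y.2)) (fun _ => c) _ _) _.
- move=> [[a b] d] [[a' b'] d']; move=> /andP [/eqP h1 _] /andP [/eqP h1' _] [eb ed].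
  subst b' d'.
  have : output C ((a, b), d) = output C ((a', b), d) by rewrite /output h1 h1'.
  rewrite !cor /= => /fvec_inj1 ->. done.
- move=> _; lra.
rewrite sum_const_fin card_all card_prod mult_INR card_word /c.
right; field; lra.
Qed.

Lemma part2 k (C : code k) : err_prob C = 0 ->
  INR k * ln 2 <= 2 * ln (exp_len (Z2 C) + 2) + 2 * ln 2 + ln 2 * exp_len (Z2 C).
Proof.
move=> e. have cor := correct k C e.
have p2 : 0 < 2 ^ k by apply: pow_lt; lra.
set c := / (2 ^ k * 2 ^ k).
have cp : 0 < c by apply: Rinv_0_lt_compat; nra.
have := bound k (Z2 C) (fun _ => [::]) (fun _ => c) (fun _ => cp) _.
rewrite exp_len_nil Rplus_0_l Rplus_0_r sum_const_fin card_all.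
have -> : INR #|{: msg k}| = Nm k by [].
have np := Nm_pos k.
have -> : Nm k * ln c / Nm k = ln c by field; lra.
rewrite Nm_eq /c ln_Rinv ?ln_mult //; try nra.
rewrite ln_2k. move=> H; apply: Rle_trans (H _) => //. lra.
move=> x.
apply: Rle_trans (sum_inj_le _ _ _ (fun y : msg k => (y.1.1, y.2)) (fun _ => c) _ _) _.
- move=> [[a b] d] [[a' b'] d'] /andP [/eqP h1 _] /andP [/eqP h1' _] [eb ed].
  subst a' d'.
  have : output C ((a, b), d) = output C ((a, b'), d) by rewrite /output h1 h1'.
  rewrite !cor /= => /fvec_inj2 ->. done.
- move=> _; lra.
rewrite sum_const_fin card_all card_prod mult_INR card_word /c.
right; field; lra.
Qed.

Lemma sum_coord k (i : 'I_k) (G : bool -> R) :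
  \big[Rplus/0]_(f : word k) G (f i) = 2 ^ k / 2 * (G true + G false).
Proof.
pose A := [set f : word k | f i].
pose t (f : word k) : word k := [ffun j => if j == i then ~~ f j else f j].
have tK : involutive t by move=> f; apply/ffunP => j; rewrite !ffunE; case: (j == i) => //; rewrite negbK.
have tinj : injective t := inv_inj tK.
have hpre : t @^-1: A = ~: A by apply/setP => f; rewrite !inE ffunE eqxx; case: (f i).
have hc := card_preimset A tinj. rewrite hpre in hc.
have hC := cardsC A. rewrite hc in hC.
have hA : INR #|A| = 2 ^ k / 2.
  have : INR (#|A| + #|A|) = 2 ^ k by rewrite hC -card_word.
  rewrite plus_INR. lra.
rewrite (bigID (fun f : word k => f i)) /=.
rewrite [X in X + _](eq_bigr (fun _ => G true)); last by move=> f ->.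
rewrite [X in _ + X](eq_bigr (fun _ => G false)); last by move=> f; case: (f i).
rewrite !sum_const_fin.
have e1 : #|(fun f : word k => f i)| = #|A| by apply: eq_card => f; rewrite inE.
have e2 : #|(fun f : word k => ~~ f i)| = #|A|.
  rewrite -hc; apply: eq_card => f; by rewrite !inE.
rewrite e1 e2 hA. lra.
Qed.

Definition Lf a b c := ln (pw (fsum a b c) c).
Lemma Lf_sum :
  Lf true true true + Lf true true false + (Lf true false true + Lf true false false) +
  (Lf false true true + Lf false true false + (Lf false false true + Lf false false false))
  = 4 * ln 2 - 6 * ln 3.
Proof. exact: pw_ln. Qed.

Lemma pw_ge0 s c : 0 <= pw s c.
Proof. rewrite /pw; case: (nat_of_ord s) => [|[|[|[|n]]]]; case: c; lra. Qed.

Definition w3 k (x : msg k) : R := \big[Rmult/1]_(i < k) pw (fvec x.1.1 x.1.2 x.2 i) (x.2 i).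

Lemma w3_pos k (x : msg k) : 0 < w3 k x.
Proof.
apply: (big_ind (fun a => 0 < a)); first lra.
  move=> *; exact: Rmult_lt_0_compat.
move=> i _; rewrite ffunE; exact: pw_pos.
Qed.

Lemma sum_ln_w3 k : \big[Rplus/0]_(x : msg k) ln (w3 k x) = INR k * ((2 ^ k / 2) ^ 3 * (4 * ln 2 - 6 * ln 3)).
Proof.
rewrite (eq_bigr (fun x : msg k => \big[Rplus/0]_(i < k) Lf (x.1.1 i) (x.1.2 i) (x.2 i))); last first.
  move=> x _; rewrite /w3 ln_prod; last by move=> i _; rewrite ffunE; apply: pw_pos.
  by apply: eq_bigr => i _; rewrite ffunE.
rewrite exchange_big /=.
rewrite (eq_bigr (fun _ => (2 ^ k / 2) ^ 3 * (4 * ln 2 - 6 * ln 3))); last first.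
  move=> i _.
  set h := 2 ^ k / 2.
  transitivity (\big[Rplus/0]_(a : word k) \big[Rplus/0]_(b : word k) \big[Rplus/0]_(c : word k) Lf (a i) (b i) (c i)).
    by rewrite pair_big pair_big; apply: eq_bigl.
  rewrite (eq_bigr (fun a : word k => \big[Rplus/0]_(b : word k) (h * (Lf (a i) (b i) true + Lf (a i) (b i) false)))); last first.
    move=> a _; apply: eq_bigr => b _. exact: (sum_coord k i (fun c => Lf (a i) (b i) c)).
  rewrite (eq_bigr (fun a : word k => h * (h * (Lf (a i) true true + Lf (a i) true false) + h * (Lf (a i) false true + Lf (a i) false false)))); last first.
    move=> a _. exact: (sum_coord k i (fun b => h * (Lf (a i) b true + Lf (a i) b false))).
  rewrite (sum_coord k i (fun a => h * (h * (Lf a true true + Lf a true false) + h * (Lf a false true + Lf a false false)))).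
  rewrite -Lf_sum. rewrite /h. ring.
rewrite sum_const_fin card_all card_ord //.
Qed.

Lemma part3 k (C : code k) : err_prob C = 0 ->
  INR k * (7/2 * ln 2 - 3/4 * ln 3) <=
  2 * ln (exp_len (Z1 C) + 2) + 2 * ln (exp_len (Z2 C) + 2) + ln 2 * (exp_len (Z1 C) + exp_len (Z2 C)).
Proof.
move=> e. have cor := correct k C e.
have p2 : 0 < 2 ^ k by apply: pow_lt; lra.
have := bound k (Z1 C) (Z2 C) (w3 k) (w3_pos k) _.
rewrite sum_ln_w3 Nm_eq !ln_mult ?ln_2k; try nra.
have -> : INR k * ((2 ^ k / 2) ^ 3 * (4 * ln 2 - 6 * ln 3)) / (2 ^ k * 2 ^ k * 2 ^ k)
   = INR k * (4 * ln 2 - 6 * ln 3) / 8 by field; lra.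
move=> H; apply: Rle_trans (H _); first lra.
move=> x.
set s := fvec x.1.1 x.1.2 x.2.
pose G (c : word k) := \big[Rmult/1]_(i < k) pw (s i) (c i).
rewrite (eq_bigr (fun y : msg k => G y.2)); last first.
  move=> y /andP [/eqP h1 /eqP h2].
  have : fvec y.1.1 y.1.2 y.2 = s by rewrite /s -!cor /output h1 h2.
  by rewrite /w3 /G => ->.
apply: Rle_trans (sum_inj_le _ _ _ (fun y : msg k => y.2) G _ _) _.
- move=> [[a b] d] [[a' b'] d'] /andP [/eqP h1 /eqP h2] /andP [/eqP h1' /eqP h2'] /= ed.
  subst d'.
  have e1 : output C ((a', b), d) = output C ((a, b), d).
    transitivity (dec C (Z1 C ((a', b'), d)) (Z2 C ((a, b), d))); first by [].
    by rewrite /output h1' h1.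
  have e2 : output C ((a, b'), d) = output C ((a, b), d).
    transitivity (dec C (Z1 C ((a, b), d)) (Z2 C ((a', b'), d))); first by [].
    by rewrite /output h2' h2.
  rewrite !cor /= in e1 e2.
  by rewrite (fvec_inj1 _ _ _ _ _ e1) (fvec_inj2 _ _ _ _ _ e2).
- move=> c; apply: (big_ind (fun a => 0 <= a)); [lra | move=> *; exact: Rmult_le_pos | move=> *; exact: pw_ge0].
rewrite /G -(bigA_distr_bigA (fun i b => pw (s i) b)) /=.
right; apply: big1 => i _. rewrite big_bool /=. exact: pw_sum.
Qed.

Lemma eventually_ln (c A D : R) : 0 < c -> 0 <= A ->
  exists N : nat, forall k : nat, (N <= k)%nat -> D + ln (INR k * A + 2) < c * INR k.
Proof.
move=> cp A0.
set m := 2 * (A + 1) / c.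
have mp : 0 < m by rewrite /m; apply: Rdiv_lt_0_compat => //; lra.
set K := D + ln m + 2 / m - 1.
have [N HN] := INR_unbounded (2 * K / c).
exists N => k Nk.
have kN : INR N <= INR k by apply: le_INR; apply/leP.
have k0 := pos_INR k.
have hy : 0 < INR k * A + 2 by nra.
have t := ln_tangent _ _ hy mp.
have e1 : (INR k * A + 2) / m = INR k * (A * c / (2 * (A + 1))) + 2 / m by rewrite /m; field; lra.
have e2 : A * c / (2 * (A + 1)) <= c / 2.
  apply: (Rmult_le_reg_r (2 * (A + 1))); first lra.
  have -> : A * c / (2 * (A + 1)) * (2 * (A + 1)) = A * c by field; lra.
  have -> : c / 2 * (2 * (A + 1)) = c * (A + 1) by field.
  nra.
have e3 : INR k * (A * c / (2 * (A + 1))) <= INR k * (c / 2) by apply: Rmult_le_compat_l.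
have e4 : 2 * K / c * c = 2 * K by field; lra.
have e5 : 2 * K < INR k * c.
  rewrite -e4. apply: Rmult_lt_compat_r => //. lra.
rewrite /K in e5. lra.
Qed.

Lemma asym (L B A1 A2 : R) : 0 < L -> exists N : nat, forall k, (N <= k)%nat ->
  B + 2 * ln (INR k * Rabs A1 + 2) + 2 * ln (INR k * Rabs A2 + 2) < L * INR k.
Proof.
move=> Lp.
have [N1 H1] := eventually_ln (L / 4) (Rabs A1) (B / 4) ltac:(lra) (Rabs_pos _).
have [N2 H2] := eventually_ln (L / 4) (Rabs A2) (B / 4) ltac:(lra) (Rabs_pos _).
exists (maxn N1 N2) => k Nk.
have := H1 k (leq_trans (leq_maxl _ _) Nk). have := H2 k (leq_trans (leq_maxr _ _) Nk). lra.
Qed.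

Lemma exp_len_ge0 k (Z : msg k -> seq bool) : 0 <= exp_len Z.
Proof. rewrite /exp_len; apply: Rmult_le_pos; first exact: pos_INR. apply: Rlt_le; apply: Rinv_0_lt_compat; exact: (Nm_pos k). Qed.

Lemma ln_bound k E A : 0 <= E -> E <= INR k * A -> ln (E + 2) <= ln (INR k * Rabs A + 2).
Proof.
move=> E0 EA. apply: ln_mono; first lra.
have := Rle_abs A. have := pos_INR k. nra.
Qed.

Theorem mainTheorem5 (R31 R32 R1 R2 : R) :
  admissible R31 R32 R1 R2 ->
  (1 <= R1)%R /\ (1 <= R2)%R /\
  ((1/2 + 3 - 3/4 * log2 3) / 2 <= (R1 + R2) / 2)%R.
Proof.
move=> Hadm.
have l2 : 0 < ln 2 by have := ln_lt_2; lra.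
have cvt : forall k (Z : msg k -> seq bool) R e, ln 2 * exp_len Z <= INR k * ln 2 * (R + e) -> exp_len Z <= INR k * (R + e).
  move=> k Z R e h. apply: (Rmult_le_reg_l (ln 2)) => //. lra.
have P1 : 1 <= R1.
  case: (Rle_lt_dec 1 R1) => // h. exfalso.
  set eps := (1 - R1) / 2.
  have ep : 0 < eps by rewrite /eps; lra.
  have [N HN] := asym (ln 2 * (1 - R1 - eps)) (2 * ln 2) (R1 + eps) 0 ltac:(apply: Rmult_lt_0_compat; rewrite /eps; lra).
  have [k [C [Nk [err [_ [_ [h1 _]]]]]]] := Hadm eps ep N.
  have p := part1 k C err. have q := HN k Nk.
  have b := ln_bound k _ _ (exp_len_ge0 k _) (cvt _ _ _ _ h1).
  rewrite Rabs_R0 Rmult_0_r Rplus_0_l in q.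
  have : 0 < ln 2 * INR k + ln 2 by have := pos_INR k; nra.
  nra.
have P2 : 1 <= R2.
  case: (Rle_lt_dec 1 R2) => // h. exfalso.
  set eps := (1 - R2) / 2.
  have ep : 0 < eps by rewrite /eps; lra.
  have [N HN] := asym (ln 2 * (1 - R2 - eps)) (2 * ln 2) (R2 + eps) 0 ltac:(apply: Rmult_lt_0_compat; rewrite /eps; lra).
  have [k [C [Nk [err [_ [_ [_ h2]]]]]]] := Hadm eps ep N.
  have p := part2 k C err. have q := HN k Nk.
  have b := ln_bound k _ _ (exp_len_ge0 k _) (cvt _ _ _ _ h2).
  rewrite Rabs_R0 Rmult_0_r Rplus_0_l in q.
  have : 0 < ln 2 * INR k + ln 2 by have := pos_INR k; nra.
  nra.
split => //; split => //.
set K := 7/2 * ln 2 - 3/4 * ln 3.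
suff HK : K <= (R1 + R2) * ln 2.
  have e : (1/2 + 3 - 3/4 * log2 3) / 2 = K / ln 2 / 2 by rewrite /log2 /K; field; lra.
  rewrite e. apply: Rmult_le_compat_r; first lra.
  apply: (Rmult_le_reg_r (ln 2)) => //.
  have -> : K / ln 2 * ln 2 = K by field; lra.
  lra.
case: (Rle_lt_dec K ((R1 + R2) * ln 2)) => // h. exfalso.
set D := K - (R1 + R2) * ln 2.
have Dp : 0 < D by rewrite /D; lra.
set eps := D / (4 * ln 2).
have ep : 0 < eps by rewrite /eps; apply: Rdiv_lt_0_compat; lra.
have fe : ln 2 * eps = D / 4 by rewrite /eps; field; lra.
have [N HN] := asym (D / 2) 0 (R1 + eps) (R2 + eps) ltac:(lra).
have [k [C [Nk [err [_ [_ [h1 h2]]]]]]] := Hadm eps ep N.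
have p := part3 k C err. have q := HN k Nk.
have b1 := ln_bound k _ _ (exp_len_ge0 k _) (cvt _ _ _ _ h1).
have b2 := ln_bound k _ _ (exp_len_ge0 k _) (cvt _ _ _ _ h2).
have fk : INR k * ln 2 * eps = INR k * (D / 4) by rewrite Rmult_assoc fe.
rewrite /D in fk q. rewrite -/K in p.
lra.
Qed.
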